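(* Let $0\to C\to B\to A\to 0$ be a short exact sequence of abelian groups, with the groups and the maps definable in some structure. Assume that $C$ is finite, and that, for $n$ the exponent of $C$, the group $A/nA$ is finite and the $n$-torsion subgroup $A[n]$ of $A$ is finite. Then there is a definable group homomorphism $A\to B$ with finite kernel and with image of finite index in $B$. *)

(* Defs.v *)
From mathcomp Require Import all_boot classical_sets cardinality.
Set Implicit Arguments. Unset Strict Implicit. Unset Printing Implicit Defensive.
Local Open Scope classical_set_scope.

(* A structure in the sense of van den Dries ("Tame topology", Ch. 1):
   for each n, a Boolean algebra of subsets of M^n (tuples 'I_n -> M),
   closed under products with M on both sides, containing the diagonals
   {x_1 = x_n}, and closed under projection forgetting the last coordinate.
   These are exactly the collections of definable (with parameters) sets of
   first-order structures on M. *)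
Unset Implicit Arguments.
Record dstructure (M : Type) := DStructure {
  dsets :> forall n : nat, set (set ('I_n -> M));
  ds_setT : forall n, dsets n setT;
  ds_setC : forall n (A : set ('I_n -> M)), dsets n A -> dsets n (~` A);
  ds_setU : forall n (A B : set ('I_n -> M)),
      dsets n A -> dsets n B -> dsets n (A `|` B);
  ds_prodr : forall n (A : set ('I_n -> M)), dsets n A ->
      dsets n.+1 [set x | A (fun i => x (widen_ord (leqnSn n) i))];
  ds_prodl : forall n (A : set ('I_n -> M)), dsets n A ->
      dsets n.+1 [set x | A (fun i => x (lift ord0 i))];
  ds_diag : forall n, dsets n.+1 [set x | x ord0 = x ord_max];
  ds_proj : forall n (A : set ('I_n.+1 -> M)), dsets n.+1 A ->
      dsets n [set x | exists y, A y /\ x = (fun i => y (widen_ord (leqnSn n) i))]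
}.
Set Implicit Arguments.
Arguments dsets {M} d n.

Definition tcat (M : Type) (k l : nat) (x : 'I_k -> M) (y : 'I_l -> M)
  : 'I_(k + l) -> M :=
  fun i => match split i with inl j => x j | inr j => y j end.

Definition fgraph_on (M : Type) (k l : nat) (D : set ('I_k -> M))
  (f : ('I_k -> M) -> ('I_l -> M)) : set ('I_(k + l) -> M) :=
  [set z | exists x, D x /\ z = tcat x (f x)].

Definition opgraph_on (M : Type) (k : nat) (D : set ('I_k -> M))
  (op : ('I_k -> M) -> ('I_k -> M) -> ('I_k -> M)) : set ('I_(k + (k + k)) -> M) :=
  [set z | exists x y, D x /\ D y /\ z = tcat x (tcat y (op x y))].

Record dagroup (M : Type) (S : dstructure M) := DAGroup {
  dg_dim : nat;
  dg_set :> set ('I_dg_dim -> M);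
  dg_add : ('I_dg_dim -> M) -> ('I_dg_dim -> M) -> ('I_dg_dim -> M);
  dg_zero : 'I_dg_dim -> M;
  dg_zeroP : dg_set dg_zero;
  dg_addP : forall x y, dg_set x -> dg_set y -> dg_set (dg_add x y);
  dg_addA : forall x y z, dg_set x -> dg_set y -> dg_set z ->
      dg_add x (dg_add y z) = dg_add (dg_add x y) z;
  dg_addC : forall x y, dg_set x -> dg_set y -> dg_add x y = dg_add y x;
  dg_add0 : forall x, dg_set x -> dg_add dg_zero x = x;
  dg_addN : forall x, dg_set x -> exists2 y, dg_set y & dg_add y x = dg_zero;
  dg_def_set : S dg_dim dg_set;
  dg_def_add : S (dg_dim + (dg_dim + dg_dim)) (opgraph_on dg_set dg_add)
}.
Arguments dg_zero {M S} d.
Arguments dg_dim {M S} d.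
Arguments dg_set {M S} d _.
Arguments dg_add {M S d} _ _.

Section Groups.
Variables (M : Type) (S : dstructure M).

Definition elt (G : dagroup S) := 'I_(dg_dim G) -> M.

Definition gmul (G : dagroup S) (n : nat) (x : elt G) : elt G :=
  iter n (dg_add x) (dg_zero G).

Definition dhom (G H : dagroup S) (f : elt G -> elt H) : Prop :=
  [/\ (forall x, dg_set G x -> dg_set H (f x)),
      (forall x y, dg_set G x -> dg_set G y -> f (dg_add x y) = dg_add (f x) (f y)) &
      S (dg_dim G + dg_dim H) (fgraph_on (dg_set G) f)].

Definition is_exponent (G : dagroup S) (n : nat) : Prop :=
  [/\ (0 < n)%N, (forall x, dg_set G x -> gmul n x = dg_zero G) &
      (forall m, (0 < m)%N -> (forall x, dg_set G x -> gmul m x = dg_zero G) -> (n <= m)%N)].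

Definition finite_index (G : dagroup S) (H : set (elt G)) : Prop :=
  finite_set [set [set y | exists2 h, H h & y = dg_add x h] | x in dg_set G].

Definition mulgroup (G : dagroup S) (n : nat) : set (elt G) :=
  [set gmul n x | x in dg_set G].

Definition torsion (G : dagroup S) (n : nat) : set (elt G) :=
  [set x | dg_set G x /\ gmul n x = dg_zero G].

Definition short_exact (C B A : dagroup S) (i : elt C -> elt B) (p : elt B -> elt A)
  : Prop :=
  [/\ dhom i, dhom p,
      (forall x y, dg_set C x -> dg_set C y -> i x = i y -> x = y),
      (forall a, dg_set A a -> exists2 b, dg_set B b & p b = a) &
      (forall b, dg_set B b -> (p b = dg_zero A <-> exists2 c, dg_set C c & i c = b))].

End Groups.
Arguments mulgroup {M S} G n _.
Arguments torsion {M S} G n _.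
Arguments is_exponent {M S} G n.

(* Main.v *)
Require Import Defs.
From mathcomp Require Import all_boot boolp classical_sets cardinality.
Local Open Scope classical_set_scope.
Set Implicit Arguments. Unset Strict Implicit.

Section Def.
Variables (M : Type) (S : dstructure M).
Arguments ds_setT {M} d n.
Arguments ds_setC {M} d {n A}.
Arguments ds_setU {M} d {n A B}.
Arguments ds_prodr {M} d {n A}.
Arguments ds_prodl {M} d {n A}.
Arguments ds_diag {M} d n.
Arguments ds_proj {M} d {n A}.

Lemma ds_ext N (X Y : set ('I_N -> M)) : S N X -> (forall x, X x <-> Y x) -> S N Y.
Proof. by move=> h e; have -> : Y = X by apply/funext=> x; apply/propext; split=> /e. Qed.

Lemma ds_setI N (X Y : set ('I_N -> M)) : S N X -> S N Y -> S N (X `&` Y).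
Proof.
move=> hX hY; apply: ds_ext (ds_setC S (ds_setU S (ds_setC S hX) (ds_setC S hY))) _ => x /=.
split; first by move=> /not_orP[/contrapT ? /contrapT ?].
by move=> [? ?] [].
Qed.

Lemma ds_bigI N (I : eqType) (s : seq I) (F : I -> set ('I_N -> M)) :
  (forall j, S N (F j)) -> S N [set x | forall j, j \in s -> F j x].
Proof.
move=> hF; elim: s => [|j s IH].
  by apply: ds_ext (ds_setT S N) _ => x; split.
apply: ds_ext (ds_setI (hF j) IH) _ => x /=; split.
  by move=> [h1 h2] k; rewrite inE => /orP[/eqP->|/h2].
by move=> h; split=> [|k ks]; apply: h; rewrite inE ?eqxx ?ks ?orbT.
Qed.

Lemma ds_prodr_gen N n (h : (n <= N)%N) (A : set ('I_n -> M)) : S n A ->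
  S N [set x | A (fun i => x (widen_ord h i))].
Proof.
move=> hA; elim: N h => [|N IH] h.
  have e : n = 0%N by apply/eqP; rewrite -leqn0.
  subst n; apply: ds_ext hA _ => x /=; suff -> : (fun i => x (widen_ord h i)) = x by [].
  by apply/funext=> i; congr x; apply: val_inj.
have [e|lt] := eqVneq n N.+1.
  subst n; apply: ds_ext hA _ => x /=; suff -> : (fun i => x (widen_ord h i)) = x by [].
  by apply/funext=> i; congr x; apply: val_inj.
have h' : (n <= N)%N by rewrite -ltnS ltn_neqAle lt h.
apply: ds_ext (ds_prodr S (IH h')) _ => x /=.
suff -> : (fun i => x (widen_ord (leqnSn N) (widen_ord h' i))) = (fun i => x (widen_ord h i)) by [].
by apply/funext=> i; congr x; apply: val_inj.
Qed.

Lemma ds_prodl_gen k n (A : set ('I_n -> M)) : S n A ->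
  S (k + n) [set x | A (fun i => x (rshift k i))].
Proof.
move=> hA; elim: k => [|k IH].
  apply: ds_ext hA _ => x /=; suff -> : (fun i => x (rshift 0 i)) = x by [].
  by apply/funext=> i; congr x; apply: val_inj.
apply: ds_ext (ds_prodl S IH) _ => x /=.
suff -> : (fun i => x (lift ord0 (rshift k i))) = (fun i => x (rshift k.+1 i)) by [].
by apply/funext=> i; congr x; apply: val_inj.
Qed.

Lemma ds_diag_gen N (a b : 'I_N) : S N [set x | x a = x b].
Proof.
wlog ab : a b / (a <= b)%N.
  move=> W; have [/W//|/ltnW ba] := leqP a b.
  by apply: ds_ext (W _ _ ba) _ => x /=; split=> ->.
pose d := (b - a)%N.
have h : (a + d.+1 <= N)%N by rewrite /d addnS subnKC // ltn_ord.
apply: ds_ext (ds_prodr_gen h (ds_prodl_gen a (ds_diag S d))) _ => x /=.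
have -> : widen_ord h (rshift a ord0) = a by apply: val_inj; rewrite /= addn0.
by have -> : widen_ord h (rshift a ord_max) = b by apply: val_inj; rewrite /= /d subnKC.
Qed.

Definition prefix m N (x : 'I_m -> M) (y : 'I_N -> M) :=
  forall (i : 'I_m) (j : 'I_N), val i = val j -> x i = y j.

Lemma ds_proj_gen N m (P : set ('I_N -> M)) : (m <= N)%N -> S N P ->
  S m [set x | exists y, P y /\ prefix x y].
Proof.
elim: N P => [|N IH] P h hP.
  have e : m = 0%N by apply/eqP; rewrite -leqn0.
  subst m; apply: ds_ext hP _ => x; split.
    by move=> Px; exists x; split=> // i j /val_inj->.
  by move=> [y [Py _]]; suff -> : x = y by []; apply/funext=> -[].
have [e|lt] := eqVneq m N.+1.
  subst m; apply: ds_ext hP _ => x; split.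
    by move=> Px; exists x; split=> // i j /val_inj->.
  move=> [y [Py pre]]; suff -> : x = y by [].
  by apply/funext=> i; exact: pre.
have h' : (m <= N)%N by rewrite -ltnS ltn_neqAle lt h.
apply: ds_ext (IH _ h' (ds_proj S hP)) _ => x /=; split.
  move=> [y' [[y [Py ->]] pre]]; exists y; split=> // i j ij.
  have jN : (j < N)%N by rewrite -ij (leq_trans (ltn_ord i)).
  by rewrite (pre i (Ordinal jN)) //; congr y; apply: val_inj.
move=> [y [Py pre]]; exists (fun i => y (widen_ord (leqnSn N) i)); split.
  by exists y.
by move=> i j ij; apply: pre.
Qed.

Lemma tcatL k l (x : 'I_k -> M) (y : 'I_l -> M) j : tcat x y (lshift l j) = x j.
Proof. by rewrite /tcat (unsplitK (inl j)). Qed.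
Lemma tcatR k l (x : 'I_k -> M) (y : 'I_l -> M) j : tcat x y (rshift k j) = y j.
Proof. by rewrite /tcat (unsplitK (inr j)). Qed.

Lemma tcat_split k l (z : 'I_(k + l) -> M) :
  tcat (fun j => z (lshift l j)) (fun j => z (rshift k j)) = z.
Proof.
apply/funext=> i; rewrite /tcat; case: splitP => j e; congr z; exact: val_inj.
Qed.

Lemma tcat_inj k l (x x' : 'I_k -> M) (y y' : 'I_l -> M) :
  tcat x y = tcat x' y' -> x = x' /\ y = y'.
Proof.
move=> e; split; apply/funext=> j.
  by rewrite -(tcatL x y) -(tcatL x' y') e.
by rewrite -(tcatR x y) -(tcatR x' y') e.
Qed.

Lemma ds_projT m n (P : set ('I_(m + n) -> M)) : S (m + n) P ->
  S m [set x | exists y, P (tcat x y)].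
Proof.
move=> hP; apply: ds_ext (ds_proj_gen (leq_addr n m) hP) _ => x; split.
  move=> [y [Py pre]]; exists (fun j => y (rshift m j)).
  suff -> : tcat x (fun j => y (rshift m j)) = y by [].
  rewrite -[RHS]tcat_split; congr tcat; apply/funext=> j; exact: pre.
move=> [y Py]; exists (tcat x y); split=> // i j ij.
have -> : j = lshift n i by apply: val_inj.
by rewrite tcatL.
Qed.

Lemma ds_subst n m (A : set ('I_n -> M)) (s : 'I_n -> 'I_m) : S n A ->
  S m [set x | A (fun i => x (s i))].
Proof.
move=> hA.
pose P := [set z : 'I_(m + n) -> M | A (fun j => z (rshift m j))] `&`
          [set z | forall j, j \in enum 'I_n -> z (rshift m j) = z (lshift n (s j))].
have hP : S (m + n) P.
  apply: ds_setI; first exact: ds_prodl_gen.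
  by apply: ds_bigI => j; exact: ds_diag_gen.
apply: ds_ext (ds_projT hP) _ => x /=; split.
  move=> [y [Ay E]]; suff <- : (fun j => tcat x y (rshift m j)) = (fun i => x (s i)) by [].
  by apply/funext=> j; rewrite E ?mem_enum // tcatL.
move=> Ax; exists (fun i => x (s i)); split.
  by rewrite /=; suff -> : (fun j => tcat x (fun i => x (s i)) (rshift m j)) = (fun i => x (s i)) by []; apply/funext=> j; rewrite tcatR.
by move=> j _ /=; rewrite tcatR tcatL.
Qed.

Definition tcatf k l N (s1 : 'I_k -> 'I_N) (s2 : 'I_l -> 'I_N) : 'I_(k + l) -> 'I_N :=
  fun i => match split i with inl j => s1 j | inr j => s2 j end.

Lemma comp_tcatf k l N (s1 : 'I_k -> 'I_N) (s2 : 'I_l -> 'I_N) (w : 'I_N -> M) :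
  (fun i => w (tcatf s1 s2 i)) = tcat (fun j => w (s1 j)) (fun j => w (s2 j)).
Proof. by apply/funext=> i; rewrite /tcatf /tcat; case: (split i). Qed.

End Def.

Section Alg.
Variables (M : Type) (S : dstructure M) (G : dagroup S).
Local Notation add := (@dg_add M S G).
Local Notation z0 := (dg_zero G).

Lemma addr0 x : dg_set G x -> add x z0 = x.
Proof. by move=> Gx; rewrite dg_addC ?dg_add0 //; exact: dg_zeroP. Qed.

Lemma addKl x y z : dg_set G x -> dg_set G y -> dg_set G z -> add x y = add x z -> y = z.
Proof.
move=> Gx Gy Gz e; have [v Gv vx] := dg_addN Gx.
by rewrite -(dg_add0 Gy) -(dg_add0 Gz) -vx -!dg_addA // e.
Qed.

Lemma zero_uniq x : dg_set G x -> add x x = x -> x = z0.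
Proof. by move=> Gx e; apply: (addKl Gx) => //; [exact: dg_zeroP | rewrite addr0]. Qed.

Lemma add_rcomm x y z : dg_set G x -> dg_set G y -> dg_set G z -> add (add x y) z = add (add x z) y.
Proof. by move=> Gx Gy Gz; rewrite -!dg_addA // (dg_addC Gy Gz). Qed.

Lemma add4 a b c d : dg_set G a -> dg_set G b -> dg_set G c -> dg_set G d ->
  add (add a b) (add c d) = add (add a c) (add b d).
Proof.
move=> Ga Gb Gc Gd; rewrite !dg_addA ?dg_addP //.
rewrite (add_rcomm Ga Gb Gc) //. all: try apply: dg_addP. all: first [exact: Ga|exact: Gb|exact: Gc]. Qed.

Lemma gmulP k x : dg_set G x -> dg_set G (gmul k x).
Proof. by move=> Gx; elim: k => [|k IH] /=; [exact: dg_zeroP | exact: dg_addP]. Qed.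
Ltac gmem := repeat first [assumption | apply: dg_addP | apply: gmulP | apply: dg_zeroP].

Lemma gmul0 k : gmul k z0 = z0.
Proof.
elim: k => [|k IH]; first by [].
by rewrite [gmul _ _]/= -/(gmul k z0) IH dg_add0 //; exact: dg_zeroP.
Qed.

Lemma gmulS k x : gmul k.+1 x = add x (gmul k x).
Proof. by []. Qed.

Lemma gmulD k x y : dg_set G x -> dg_set G y -> gmul k (add x y) = add (gmul k x) (gmul k y).
Proof.
move=> Gx Gy; elim: k => [|k IH].
  by rewrite /gmul /= dg_add0 //; exact: dg_zeroP.
rewrite !gmulS IH add4 //; gmem.
Qed.

End Alg.
Ltac gmem := repeat first [assumption | apply: dg_addP | apply: gmulP | apply: dg_zeroP].

Section Hom.
Variables (M : Type) (S : dstructure M) (G H : dagroup S) (f : elt G -> elt H).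
Hypothesis hf : dhom f.

Lemma hom0 : f (dg_zero G) = dg_zero H.
Proof.
case: hf => fP fD _; have G0 := dg_zeroP G.
by apply: zero_uniq; [exact: fP | rewrite -fD // dg_add0].
Qed.

Lemma hom_gmul k x : dg_set G x -> f (gmul k x) = gmul k (f x).
Proof.
case: hf => fP fD _ Gx; elim: k => [|k IH]; first exact: hom0.
rewrite !gmulS fD; [by rewrite IH | done | exact: gmulP].
Qed.

End Hom.

Section Coset.
Variables (M : Type) (S : dstructure M) (G : dagroup S) (n : nat).
Local Notation add := (@dg_add M S G).
Definition coset (x : elt G) := [set y | exists2 h, mulgroup G n h & y = add x h].

Lemma coset_shift x d : dg_set G x -> dg_set G d -> coset (add x (gmul n d)) = coset x.
Proof.
move=> Gx Gd; apply/seteqP; split=> y /= [h [e Ge <-] ->].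
  exists (gmul n (add d e)); first by exists (add d e) => //; apply: dg_addP.
  by rewrite gmulD // dg_addA //; gmem.
have [v Gv vd] := dg_addN Gd.
exists (gmul n (add v e)); first by exists (add v e) => //; apply: dg_addP.
rewrite gmulD // -dg_addA; try gmem. congr dg_add.
rewrite dg_addA; try gmem. rewrite -gmulD // (dg_addC Gd Gv) vd gmul0 dg_add0 //; gmem.
Qed.

Lemma coset_mem x : dg_set G x -> coset x x.
Proof.
move=> Gx; exists (gmul n (dg_zero G)); first by exists (dg_zero G) => //; exact: dg_zeroP.
by rewrite gmul0 addr0.
Qed.
End Coset.

Section Graphs.
Variables (M : Type) (S : dstructure M).

Lemma fgraphP k l (D : set ('I_k -> M)) (f : ('I_k -> M) -> ('I_l -> M)) x y :
  fgraph_on D f (tcat x y) <-> D x /\ y = f x.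
Proof.
split; last by move=> [Dx ->]; exists x.
by move=> [x' [Dx' /tcat_inj [-> ->]]].
Qed.

Lemma opgraphP k (D : set ('I_k -> M)) op x y z :
  opgraph_on D op (tcat x (tcat y z)) <-> [/\ D x, D y & z = op x y].
Proof.
split; last by move=> [Dx Dy ->]; exists x, y.
by move=> [x' [y' [Dx' [Dy' /tcat_inj [-> /tcat_inj [-> ->]]]]]].
Qed.

Lemma tcat_surj k l (z : 'I_(k + l) -> M) : exists x y, z = tcat x y.
Proof. by exists (fun j => z (lshift l j)), (fun j => z (rshift k j)); rewrite tcat_split. Qed.

Definition cmp N k (w : 'I_N -> M) (s : 'I_k -> 'I_N) : 'I_k -> M := fun j => w (s j).

Definition sLL k l m (j : 'I_k) : 'I_(k + l + m) := lshift m (lshift l j).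
Definition sLR k l m (j : 'I_l) : 'I_(k + l + m) := lshift m (rshift k j).
Definition sR k l m (j : 'I_m) : 'I_(k + l + m) := rshift (k + l) j.

Lemma cLL k l m (x : 'I_k -> M) (y : 'I_l -> M) (u : 'I_m -> M) :
  cmp (tcat (tcat x y) u) (@sLL k l m) = x.
Proof. by apply/funext=> j; rewrite /cmp /sLL tcatL tcatL. Qed.
Lemma cLR k l m (x : 'I_k -> M) (y : 'I_l -> M) (u : 'I_m -> M) :
  cmp (tcat (tcat x y) u) (@sLR k l m) = y.
Proof. by apply/funext=> j; rewrite /cmp /sLR tcatL tcatR. Qed.
Lemma cR k l m (x : 'I_k -> M) (y : 'I_l -> M) (u : 'I_m -> M) :
  cmp (tcat (tcat x y) u) (@sR k l m) = u.
Proof. by apply/funext=> j; rewrite /cmp /sR tcatR. Qed.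

Lemma ds_subst2 N k l (X : set ('I_(k + l) -> M)) (s1 : 'I_k -> 'I_N) (s2 : 'I_l -> 'I_N) :
  S (k + l) X -> S N [set w | X (tcat (cmp w s1) (cmp w s2))].
Proof.
move=> hX; apply: ds_ext (ds_subst (tcatf s1 s2) hX) _ => w /=.
by rewrite comp_tcatf.
Qed.

Lemma ds_subst3 N k l m (X : set ('I_(k + (l + m)) -> M)) (s1 : 'I_k -> 'I_N)
  (s2 : 'I_l -> 'I_N) (s3 : 'I_m -> 'I_N) :
  S (k + (l + m)) X -> S N [set w | X (tcat (cmp w s1) (tcat (cmp w s2) (cmp w s3)))].
Proof.
move=> hX; apply: ds_ext (ds_subst2 s1 (tcatf s2 s3) hX) _ => w /=.
have -> : cmp w (tcatf s2 s3) = tcat (cmp w s2) (cmp w s3) by exact: comp_tcatf.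
by [].
Qed.

Lemma def_gmul (G : dagroup S) k :
  S (dg_dim G + dg_dim G) (fgraph_on (dg_set G) (gmul k.+1)).
Proof.
set d := dg_dim G.
elim: k => [|k IH].
  pose X := [set w : 'I_(d + d) -> M | dg_set G (fun j => w (lshift d j))] `&`
    [set w | forall j, j \in enum 'I_d -> w (lshift d j) = w (rshift d j)].
  have hX : S (d + d) X.
    apply: ds_setI; first exact: (ds_subst (lshift d) (dg_def_set G)).
    by apply: ds_bigI => j; exact: ds_diag_gen.
  apply: ds_ext hX _ => w; have [x [y ->]] := tcat_surj w.
  rewrite fgraphP /X /=.
  have -> : (fun j => tcat x y (lshift d j)) = x by apply/funext=> j; rewrite tcatL.
  have e : gmul 1 x = x -> y = gmul 1 x <-> (forall j, j \in enum 'I_d -> tcat x y (lshift d j) = tcat x y (rshift d j)).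
    move=> ->; split; first by move=> -> j _; rewrite tcatL tcatR.
    by move=> h; apply/funext=> j; rewrite -(tcatL x y) -(tcatR x y) h // mem_enum.
  split; move=> [Gx h]; split=> //; apply/e => //; exact: addr0.
pose X := [set w : 'I_(d + d + d) -> M |
             fgraph_on (dg_set G) (gmul k.+1) (tcat (cmp w (@sLL d d d)) (cmp w (@sR d d d)))] `&`
          [set w | opgraph_on (dg_set G) dg_add
             (tcat (cmp w (@sLL d d d)) (tcat (cmp w (@sR d d d)) (cmp w (@sLR d d d))))].
have hX : S (d + d + d) X.
  apply: ds_setI; first exact: ds_subst2.
  exact: (ds_subst3 _ _ _ (dg_def_add G)).
apply: ds_ext (ds_projT hX) _ => z; have [x [y ->]] := tcat_surj z.
rewrite fgraphP /X /=; split.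
  move=> [u []]; rewrite cLL cR cLR fgraphP opgraphP => -[Gx ->] [_ _ ->].
  by [].
move=> [Gx ->]; exists (gmul k.+1 x); split.
  by rewrite cLL cR fgraphP.
by rewrite cLL cR cLR opgraphP; split=> //; exact: gmulP.
Qed.

End Graphs.

Theorem lemma4p1 (M : Type) (S : dstructure M) (C B A : dagroup S)
  (i : elt C -> elt B) (p : elt B -> elt A) :
  short_exact i p ->
  finite_set (dg_set C) ->
  forall n : nat, is_exponent C n ->
  finite_index (mulgroup A n) ->
  finite_set (torsion A n) ->
  exists f : elt A -> elt B,
    [/\ dhom f,
        finite_set [set a | dg_set A a /\ f a = dg_zero B] &
        finite_index [set f a | a in dg_set A]].
Proof.
move=> [hi hp iinj psurj pker] finC n [n0 nC _] finA finT.
have [iP iD _] := hi; have [pP pD pdef] := hp.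
pose lift (a : elt A) : elt B :=
  match pselect (exists b, dg_set B b /\ p b = a) with
  | left h => proj1_sig (cid h) | right _ => dg_zero B end.
have liftP a : dg_set A a -> dg_set B (lift a) /\ p (lift a) = a.
  move=> Aa; rewrite /lift; case: pselect => [h|[]].
    by case: (cid h).
  by have [b Bb <-] := psurj a Aa; exists b.
have diff b b' : dg_set B b -> dg_set B b' -> p b = p b' ->
    exists2 c, dg_set C c & b = dg_add b' (i c).
  move=> Bb Bb' e; have [v Bv vb'] := dg_addN Bb'.
  have Bvb : dg_set B (dg_add v b) by apply: dg_addP.
  have [c Cc ic] : exists2 c, dg_set C c & i c = dg_add v b.
    apply/pker => //; rewrite pD // e -pD // vb'; exact: hom0.
  exists c => //; rewrite ic dg_addA // (dg_addC Bb' Bv) vb' dg_add0 //.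
have gmul_i c : dg_set C c -> gmul n (i c) = dg_zero B.
  by move=> Cc; rewrite -(hom_gmul hi) // nC // (hom0 hi).
pose f a := gmul n (lift a).
have E b : dg_set B b -> gmul n b = f (p b).
  move=> Bb; have [Bl pl] := liftP (p b) (pP _ Bb).
  have [c Cc eb] := diff _ _ Bb Bl (esym pl).
  rewrite [in LHS]eb gmulD //; last exact: iP.
  by rewrite gmul_i // addr0 //; apply: gmulP.
exists f; split.
- split.
  + by move=> a Aa; apply: gmulP; case: (liftP a Aa).
  + move=> a a' Aa Aa'; have [Bl pl] := liftP a Aa; have [Bl' pl'] := liftP a' Aa'.
    have Bs : dg_set B (dg_add (lift a) (lift a')) by apply: dg_addP.
    by rewrite /f -gmulD // (E _ Bs) pD // pl pl'.
  + have Gn : S (dg_dim B + dg_dim B) (fgraph_on (dg_set B) (gmul n)).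
      by rewrite -(prednK n0); exact: def_gmul.
    set dA := dg_dim A; set dB := dg_dim B.
    pose X := [set w : 'I_(dA + dB + dB) -> M |
         fgraph_on (dg_set B) p (tcat (cmp w (@sR dA dB dB)) (cmp w (@sLL dA dB dB)))] `&`
      [set w | fgraph_on (dg_set B) (gmul n) (tcat (cmp w (@sR dA dB dB)) (cmp w (@sLR dA dB dB)))].
    have hX : S (dA + dB + dB) X by apply: ds_setI; exact: ds_subst2.
    apply: ds_ext (ds_projT hX) _ => z; have [a [y ->]] := tcat_surj z.
    rewrite fgraphP /X /=; split.
      move=> [b []]; rewrite cR cLL cLR !fgraphP => -[Bb ->] [_ ->].
      by split; [exact: pP | exact: E].
    move=> [Aa ->]; have [Bl pl] := liftP a Aa; exists (lift a).
    by rewrite cR cLL cLR !fgraphP.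
- apply: sub_finite_set finT => a /= [Aa fa]; split=> //.
  have [Bl pl] := liftP a Aa.
  have -> : gmul n a = p (f a) by rewrite /f (hom_gmul hp) // pl.
  by rewrite fa (hom0 hp).
- have Im : [set f a | a in dg_set A] = mulgroup B n.
    apply/seteqP; split => x /=.
      by move=> [a Aa <-]; exists (lift a) => //; case: (liftP a Aa).
    by move=> [b Bb <-]; exists (p b); [exact: pP | rewrite E].
  rewrite Im /finite_index.
  pose rep (K : set (elt A)) : elt A :=
    match pselect (exists x, dg_set A x /\ coset n x = K) with
    | left h => proj1_sig (cid h) | right _ => dg_zero A end.
  have repP x : dg_set A x -> dg_set A (rep (coset n x)) /\ coset n (rep (coset n x)) = coset n x.
    move=> Ax; rewrite /rep; case: pselect => [h|[]]; first by case: (cid h).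
    by exists x.
  pose g (K : set (elt A)) (c : elt C) := coset n (dg_add (lift (rep K)) (i c)).
  apply: sub_finite_set (finite_image2 g finA finC).
  move=> K [b Bb <-].
  have Apb := pP _ Bb.
  have [Aa0 ca0] := repP _ Apb.
  set a0 := rep (coset n (p b)) in Aa0 ca0.
  have : coset n a0 (p b) by rewrite ca0; exact: coset_mem.
  move=> [h [a' Aa' <-] pbe].
  have [Bl0 pl0] := liftP a0 Aa0; have [Bl' pl'] := liftP a' Aa'.
  have Bn : dg_set B (gmul n (lift a')) by exact: gmulP.
  have Bb1 : dg_set B (dg_add (lift a0) (gmul n (lift a'))) by exact: dg_addP.
  have pb1 : p b = p (dg_add (lift a0) (gmul n (lift a'))).
    by rewrite pD // (hom_gmul hp) // pl0 pl'.
  have [c Cc eb] := diff _ _ Bb Bb1 pb1.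
  have Bic : dg_set B (i c) by exact: iP.
  exists (coset n (p b)); first by exists (p b).
  exists c => //.
  rewrite /g -/a0 eb add_rcomm //; symmetry; rewrite -/(coset n _) coset_shift //; exact: dg_addP.
Qed.
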